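(* Let $T$ be a tree and let a group $\Gamma$ act on $T$ by automorphisms such that the action is minimal and strongly hyperbolic. Let $e$ be an edge of $T$ and suppose $g\in\Gamma$ fixes every point of $Z_B(e)$. Then $g$ fixes every point of $Z(e)$. In particular, the fixator subgroups in $\Gamma$ of $Z_0(e)$, of $Z_B(e)$, and of $Z(e)\cap\overline{\partial T}$ coincide.
   Context: A tree $T$ has vertex set $V$ and edge set $E$ with source/range maps $s,r$ and an inversion $e\mapsto\bar e$ ($s(\bar e)=r(e)$); $d$ is the path metric on vertices. A ray is a sequence $(r_i)_{i\ge0}$ of vertices with $d(r_i,r_{i+n})=n$; two rays are cofinal if they eventually agree up to a shift of indices; $\partial T$ is the set of cofinality classes of rays. For an edge $e$: $Z_0(e)=\{v\in V: d(v,s(e))>d(v,r(e))\}$; $Z_B(e)\subseteq\partial T$ is the set of classes of rays $(r_i)$ with $r_j=s(e), r_{j+1}=r(e)$ for some $j$; $Z(e)=Z_0(e)\cup Z_B(e)$. The shadow topology on $T\cup\partial T$ (identifying $T$ with $V$) is generated by the subbase $\{Z(e): e\in E\}$; it is compact Hausdorff, and $\overline{\partial T}$ denotes the closure of $\partial T$. Automorphisms of $T$ act on $T\cup\partial T$. An automorphism is hyperbolic if it fixes no vertex and inverts no edge; such an automorphism has exactly two fixed points in $T\cup\partial T$, both in $\partial T$. An action of $\Gamma$ on $T$ is minimal if $T$ has no proper $\Gamma$-invariant subtree, and strongly hyperbolic if $\Gamma$ contains two hyperbolic automorphisms with disjoint fixed point sets. *)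

(* Defs.v *)
From Stdlib Require Import List Arith.
Import ListNotations.


Record graph := {
  V : Type;
  E : Type;
  src : E -> V;
  rng : E -> V;
  bar : E -> E;
  bar_inv : forall e, bar (bar e) = e;
  bar_neq : forall e, bar e <> e;
  src_bar : forall e, src (bar e) = rng e
}.

Fixpoint is_path (T : graph) (u : V T) (l : list (E T)) (v : V T) : Prop :=
  match l with
  | nil => u = v
  | e :: l' => src T e = u /\ is_path T (rng T e) l' v
  end.

Fixpoint reduced (T : graph) (l : list (E T)) : Prop :=
  match l with
  | e1 :: ((e2 :: _) as l') => e2 <> bar T e1 /\ reduced T l'
  | _ => True
  end.

Definition is_tree (T : graph) : Prop :=
  (exists v : V T, True) /\
  (forall u v : V T, exists l, is_path T u l v) /\
  (forall (u : V T) l, is_path T u l u -> reduced T l -> l = nil).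

Definition dist (T : graph) (u v : V T) (n : nat) : Prop :=
  (exists l, is_path T u l v /\ length l = n) /\
  (forall l, is_path T u l v -> n <= length l).

Definition is_ray (T : graph) (rho : nat -> V T) : Prop :=
  forall i n, dist T (rho i) (rho (i + n)) n.

Definition cofinal (T : graph) (rho rho' : nat -> V T) : Prop :=
  exists k m, forall i, rho (i + k) = rho' (i + m).

Definition inZ0 (T : graph) (e : E T) (v : V T) : Prop :=
  exists a b, dist T v (src T e) a /\ dist T v (rng T e) b /\ b < a.

Definition inZB (T : graph) (e : E T) (rho : nat -> V T) : Prop :=
  exists rho', is_ray T rho' /\ cofinal T rho rho' /\
    exists j, rho' j = src T e /\ rho' (S j) = rng T e.

(** Points of T ∪ ∂T: vertices, and boundary points represented by rays
    (two rays representing the same point iff cofinal). *)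
Inductive point (T : graph) : Type :=
  | PV : V T -> point T
  | PB : forall rho : nat -> V T, is_ray T rho -> point T.

Definition inZ (T : graph) (e : E T) (x : point T) : Prop :=
  match x with
  | PV _ v => inZ0 T e v
  | PB _ rho _ => inZB T e rho
  end.

(** x lies in the closure of ∂T in the shadow topology: every basic open
    neighbourhood (finite intersection of subbasic sets Z(e)) of x meets ∂T. *)
Definition in_closure_boundary (T : graph) (x : point T) : Prop :=
  forall l : list (E T), (forall e, In e l -> inZ T e x) ->
    exists rho (h : is_ray T rho), forall e, In e l -> inZ T e (PB T rho h).

Record group := {
  G : Type;
  mul : G -> G -> G;
  one : G;
  inv : G -> G;
  mulA : forall x y z, mul x (mul y z) = mul (mul x y) z;
  mul1g : forall x, mul one x = x;
  mulVg : forall x, mul (inv x) x = one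
}.

Record action (T : graph) (Gm : group) := {
  actV : G Gm -> V T -> V T;
  actE : G Gm -> E T -> E T;
  act_src : forall g e, src T (actE g e) = actV g (src T e);
  act_rng : forall g e, rng T (actE g e) = actV g (rng T e);
  act_bar : forall g e, actE g (bar T e) = bar T (actE g e);
  actV_one : forall v, actV (one Gm) v = v;
  actE_one : forall e, actE (one Gm) e = e;
  actV_mul : forall g h v, actV (mul Gm g h) v = actV g (actV h v);
  actE_mul : forall g h e, actE (mul Gm g h) e = actE g (actE h e)
}.

Arguments actV {T Gm} a _ _.
Arguments actE {T Gm} a _ _.

Definition fixes (T : graph) (Gm : group) (A : action T Gm) (g : G Gm)
  (x : point T) : Prop :=
  match x with
  | PV _ v => actV A g v = v
  | PB _ rho _ => cofinal T (fun i => actV A g (rho i)) rho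
  end.

Arguments fixes {T Gm} A g x.
Arguments in_closure_boundary {T} x.

Definition hyperbolic (T : graph) (Gm : group) (A : action T Gm) (g : G Gm) : Prop :=
  (forall v, actV A g v <> v) /\ (forall e, actE A g e <> bar T e).

Arguments hyperbolic {T Gm} A g.

Definition strongly_hyperbolic (T : graph) (Gm : group) (A : action T Gm) : Prop :=
  exists g h, hyperbolic A g /\ hyperbolic A h /\
    forall x : point T, ~ (fixes A g x /\ fixes A h x).

Arguments strongly_hyperbolic {T Gm} A.

Definition minimal (T : graph) (Gm : group) (A : action T Gm) : Prop :=
  forall W : V T -> Prop,
    (exists v, W v) ->
    (forall u v, W u -> W v -> exists l, is_path T u l v /\
        Forall (fun e => W (src T e) /\ W (rng T e)) l) ->
    (forall g v, W v -> W (actV A g v)) ->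
    forall v, W v.

Arguments minimal {T Gm} A.

Definition fixes_Z0 (T : graph) (Gm : group) (A : action T Gm) (e : E T) (g : G Gm) :=
  forall v, inZ0 T e v -> fixes A g (PV T v).
Definition fixes_ZB (T : graph) (Gm : group) (A : action T Gm) (e : E T) (g : G Gm) :=
  forall rho (h : is_ray T rho), inZB T e rho -> fixes A g (PB T rho h).
Definition fixes_Z (T : graph) (Gm : group) (A : action T Gm) (e : E T) (g : G Gm) :=
  forall x, inZ T e x -> fixes A g x.
Definition fixes_Z_cl (T : graph) (Gm : group) (A : action T Gm) (e : E T) (g : G Gm) :=
  forall x, inZ T e x -> in_closure_boundary x -> fixes A g x.

Arguments fixes_Z0 {T Gm} A e g.
Arguments fixes_ZB {T Gm} A e g.
Arguments fixes_Z {T Gm} A e g.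
Arguments fixes_Z_cl {T Gm} A e g.

(* Main.v *)
Require Import Defs.
From Stdlib Require Import List Arith Lia Classical ClassicalEpsilon.
Import ListNotations.

Lemma min_exists (P : nat -> Prop) : (exists n, P n) -> exists n, P n /\ forall m, P m -> n <= m.
Proof.
  intros [n Hn]. apply NNPP; intro Hno.
  assert (H : forall k, forall n, n <= k -> ~ P n).
  { induction k; intros n0 Hle Hp.
    - apply Hno. exists n0; split; auto. intros m _; lia.
    - apply Hno. exists n0. split; auto. intros m Hm.
      destruct (le_lt_dec n0 m); auto. exfalso. apply (IHk m); auto; lia. }
  exact (H n n (le_n n) Hn).
Qed.

Section Tree.
Variable T : graph.
Variable HT : is_tree T.

Notation Vx := (V T).
Notation Ex := (E T).
Notation s := (src T).
Notation r := (rng T).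
Notation b := (bar T).

Lemma bar_rng e : r (b e) = s e.
Proof. rewrite <- (src_bar T (b e)), (bar_inv T e). reflexivity. Qed.

Lemma is_path_app u l1 l2 w :
  is_path T u (l1 ++ l2) w <-> exists v, is_path T u l1 v /\ is_path T v l2 w.
Proof.
  revert u; induction l1 as [|a l1 IH]; intro u; simpl.
  - split; [intro H; exists u; auto | intros [v [-> H]]; auto].
  - split.
    + intros [Ha H]. apply IH in H. destruct H as [v [H1 H2]]. exists v; auto.
    + intros [v [[Ha H1] H2]]. split; auto. apply IH. exists v; auto.
Qed.

Definition rp (l : list Ex) := rev (map b l).

Lemma is_path_rp u l v : is_path T u l v -> is_path T v (rp l) u.
Proof.
  revert u; induction l as [|a l IH]; intros u H; simpl in *.
  - subst; reflexivity.
  - destruct H as [Ha H]. apply IH in H. unfold rp in *; simpl.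
    apply is_path_app. exists (r a). split; auto. simpl. split.
    + apply src_bar.
    + rewrite bar_rng; auto.
Qed.

Definition hc (a : Ex) (l : list Ex) : Prop :=
  match l with [] => True | c :: _ => c <> b a end.

Lemma reduced_cons a l : reduced T (a :: l) <-> hc a l /\ reduced T l.
Proof. destruct l; simpl; tauto. Qed.

Lemma reduced_app_x l x m :
  reduced T (l ++ [x]) -> reduced T (x :: m) -> reduced T (l ++ x :: m).
Proof.
  induction l as [|a l IH]; simpl; auto.
  intros H1 H2. apply reduced_cons in H1. apply reduced_cons. destruct H1 as [Hh Hr].
  split; auto. destruct l; simpl in *; auto.
Qed.

Lemma reduced_app_inv1 l m : reduced T (l ++ m) -> reduced T l.
Proof.
  induction l as [|a l IH]; simpl; auto.
  intros H. apply reduced_cons in H. apply reduced_cons. destruct H as [Hh Hr].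
  split; auto. destruct l; simpl in *; auto.
Qed.

Lemma reduced_app_inv2 l m : reduced T (l ++ m) -> reduced T m.
Proof.
  induction l as [|a l IH]; simpl; auto.
  intros H. apply reduced_cons in H. apply IH; tauto.
Qed.

Lemma reduced_rp l : reduced T l -> reduced T (rp l).
Proof.
  induction l as [|a l IH]; simpl; auto.
  intro H. apply reduced_cons in H. destruct H as [Hh Hr].
  unfold rp; simpl. fold (rp l).
  destruct l as [|c l].
  - simpl. auto.
  - assert (E1 : rp (c :: l) = rp l ++ [b c]) by reflexivity.
    rewrite E1 in *. rewrite <- app_assoc. simpl.
    apply reduced_app_x; auto. simpl. split; auto.
    intro Hbb. rewrite (bar_inv T c) in Hbb. apply Hh. congruence.
Qed.

Lemma UR u l1 l2 v :
  is_path T u l1 v -> is_path T u l2 v -> reduced T l1 -> reduced T l2 -> l1 = l2.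
Proof.
  destruct HT as [_ [_ Hcirc]].
  revert u l2; induction l1 as [|a l1 IH]; intros u l2 H1 H2 R1 R2.
  - simpl in H1; subst. symmetry. eapply Hcirc; eauto.
  - destruct l2 as [|c l2].
    + simpl in H2; subst. exfalso. assert (a :: l1 = []) by (eapply Hcirc; eauto). discriminate.
    + destruct H1 as [Ha H1]. destruct H2 as [Hc H2].
      destruct (classic (a = c)) as [<-|Hne].
      * f_equal. eapply IH; eauto.
        -- apply reduced_cons in R1; tauto.
        -- apply reduced_cons in R2; tauto.
      * exfalso.
        assert (P : is_path T v (rp (a :: l1) ++ c :: l2) v).
        { apply is_path_app. exists u. split.
          - apply is_path_rp. simpl. auto.
          - simpl. auto. }
        assert (Rd : reduced T (rp (a :: l1) ++ c :: l2)).
        { assert (E1 : rp (a :: l1) = rp l1 ++ [b a]) by reflexivity.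
          rewrite E1, <- app_assoc. simpl. apply reduced_app_x.
          - rewrite <- E1. apply reduced_rp; auto.
          - apply reduced_cons. split; auto. simpl. intro Hcb. apply Hne.
            rewrite Hcb, bar_inv. reflexivity. }
        pose proof (Hcirc v _ P Rd) as Hn. destruct (rp (a :: l1)); discriminate.
Qed.

Lemma not_reduced_split l : ~ reduced T l -> exists p a q, l = p ++ a :: b a :: q.
Proof.
  induction l as [|a l IH]; simpl; intro H.
  - exfalso; auto.
  - destruct l as [|c l]; [exfalso; auto|].
    destruct (classic (c = b a)) as [Hc|Hc].
    + exists [], a, l. simpl. rewrite Hc. reflexivity.
    + assert (~ reduced T (c :: l)) by tauto.
      destruct (IH H0) as [p [a' [q Hq]]]. exists (a :: p), a', q. rewrite Hq. reflexivity.
Qed.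

Lemma dist_exists u v : exists n, dist T u v n.
Proof.
  destruct HT as [_ [Hc _]].
  destruct (min_exists (fun n => exists l, is_path T u l v /\ length l = n)) as [n [[l [Hl Hn]] Hm]].
  { destruct (Hc u v) as [l Hl]. exists (length l), l; auto. }
  exists n. split; [exists l; auto|]. intros l' Hl'. apply Hm. exists l'; auto.
Qed.

Definition dd (u v : Vx) : nat := proj1_sig (constructive_indefinite_description _ (dist_exists u v)).

Lemma dd_spec u v : dist T u v (dd u v).
Proof. unfold dd. destruct (constructive_indefinite_description _ _); auto. Qed.

Lemma dist_unique u v n m : dist T u v n -> dist T u v m -> n = m.
Proof.
  intros [[l1 [H1 L1]] M1] [[l2 [H2 L2]] M2].
  specialize (M1 l2 H2). specialize (M2 l1 H1). lia.
Qed.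

Lemma dist_dd u v n : dist T u v n <-> n = dd u v.
Proof. split; intro H. - eapply dist_unique; eauto. apply dd_spec. - subst; apply dd_spec. Qed.

Lemma dd_le u l v : is_path T u l v -> dd u v <= length l.
Proof. intro H. destruct (dd_spec u v) as [_ M]. auto. Qed.

Lemma geod u v : exists l, is_path T u l v /\ length l = dd u v /\ reduced T l.
Proof.
  destruct (dd_spec u v) as [[l [H L]] M]. exists l. repeat split; auto.
  apply NNPP; intro Hn. destruct (not_reduced_split _ Hn) as [p [a [q ->]]].
  apply is_path_app in H. destruct H as [w [Hp Hq]]. simpl in Hq.
  destruct Hq as [Ha [Hb Hq]].
  assert (P : is_path T u (p ++ q) v).
  { apply is_path_app. exists w. split; auto. rewrite bar_rng, Ha in Hq. auto. }
  specialize (M _ P). rewrite !length_app in M, L. simpl in *. lia.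
Qed.

Lemma reduced_len u l v : is_path T u l v -> reduced T l -> length l = dd u v.
Proof.
  intros H R. destruct (geod u v) as [l' [H' [L' R']]].
  rewrite (UR _ _ _ _ H H' R R'). auto.
Qed.

Lemma dd_refl u : dd u u = 0.
Proof. symmetry. apply dist_dd. split. exists []; simpl; auto. intros; lia. Qed.

Lemma dd_eq0 u v : dd u v = 0 -> u = v.
Proof.
  intro H. destruct (geod u v) as [l [Hl [L _]]]. rewrite H in L.
  destruct l; [simpl in Hl; auto| discriminate].
Qed.

Lemma dd_sym u v : dd u v = dd v u.
Proof.
  destruct (geod u v) as [l [Hl [L _]]]. destruct (geod v u) as [l' [Hl' [L' _]]].
  pose proof (dd_le _ _ _ (is_path_rp _ _ _ Hl)).
  pose proof (dd_le _ _ _ (is_path_rp _ _ _ Hl')).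
  unfold rp in *. rewrite length_rev, length_map in *. lia.
Qed.

Lemma dd_tri u v w : dd u w <= dd u v + dd v w.
Proof.
  destruct (geod u v) as [l [Hl [L _]]]. destruct (geod v w) as [l' [Hl' [L' _]]].
  assert (P : is_path T u (l ++ l') w) by (apply is_path_app; eauto).
  pose proof (dd_le _ _ _ P). rewrite length_app in *. lia.
Qed.

Lemma dd_adj u v : dd u v = 1 <-> exists e, s e = u /\ r e = v.
Proof.
  split.
  - intro H. destruct (geod u v) as [l [Hl [L _]]]. rewrite H in L.
    destruct l as [|e [|]]; try discriminate. simpl in Hl. exists e; tauto.
  - intros [e [He1 He2]]. symmetry. rewrite <- (reduced_len u [e] v); simpl; auto.
Qed.

Lemma edge_unique e1 e2 : s e1 = s e2 -> r e1 = r e2 -> e1 = e2.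
Proof.
  intros H1 H2. assert (P : [e1] = [e2]).
  { apply (UR (s e1) [e1] [e2] (r e1)); simpl; auto. }
  inversion P; auto.
Qed.

Lemma dd_adj_neq u v : dd u v = 1 -> u <> v.
Proof. intros H ->. rewrite dd_refl in H. discriminate. Qed.

Lemma M3 u v z : dd u v = 1 -> dd u z = S (dd v z) \/ dd v z = S (dd u z).
Proof.
  intro H. destruct (proj1 (dd_adj u v) H) as [e [He1 He2]].
  destruct (geod v z) as [l [Hl [L R]]].
  destruct l as [|c l].
  - simpl in Hl. subst z. left. rewrite dd_refl, <- He2, <- He1. 
    apply (proj2 (dd_adj _ _)). eauto.
  - destruct (classic (c = b e)) as [Hc|Hc].
    + right. destruct Hl as [Hcs Hl]. subst c. rewrite bar_rng, He1 in Hl.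
      pose proof (dd_le _ _ _ Hl). simpl in L.
      pose proof (dd_tri v u z). rewrite (dd_sym v u), H in H1. lia.
    + left. assert (P : is_path T u (e :: c :: l) z).
      { simpl. split; auto. rewrite He2. exact Hl. }
      assert (Rd : reduced T (e :: c :: l)) by (simpl; split; auto).
      rewrite <- (reduced_len _ _ _ P Rd). simpl in *. lia.
Qed.

Lemma M3' u v z : dd u v = 1 -> dd u z <> dd v z.
Proof. intros H. destruct (M3 u v z H); lia. Qed.

Lemma closer_exists u v : u <> v -> exists y, dd u y = 1 /\ S (dd y v) = dd u v.
Proof.
  intro Hne. destruct (geod u v) as [l [Hl [L R]]].
  destruct l as [|e l]; [simpl in Hl; contradiction|].
  destruct Hl as [He Hl]. exists (r e). split.
  - apply dd_adj; eauto.
  - pose proof (dd_le _ _ _ Hl). simpl in L.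
    pose proof (dd_tri u (r e) v).
    assert (dd u (r e) = 1) by (apply dd_adj; eauto). lia.
Qed.

Lemma closer_unique x y1 y2 z : dd x y1 = 1 -> dd x y2 = 1 ->
  S (dd y1 z) = dd x z -> S (dd y2 z) = dd x z -> y1 = y2.
Proof.
  intros A1 A2 D1 D2.
  destruct (proj1 (dd_adj _ _) A1) as [e1 [E1 F1]].
  destruct (proj1 (dd_adj _ _) A2) as [e2 [E2 F2]].
  destruct (geod y1 z) as [l1 [H1 [L1 R1]]].
  destruct (geod y2 z) as [l2 [H2 [L2 R2]]].
  assert (Rd : forall e y l, s e = x -> r e = y -> is_path T y l z -> length l = dd y z ->
     S (dd y z) = dd x z -> reduced T l -> reduced T (e :: l)).
  { intros e y l Es Er Hp Lp Dp Rp. apply reduced_cons. split; auto.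
    destruct l as [|c l]; simpl; auto. intro Hc. subst c.
    destruct Hp as [_ Hp]. rewrite bar_rng, Es in Hp. pose proof (dd_le _ _ _ Hp).
    simpl in Lp. lia. }
  assert (P1 : is_path T x (e1 :: l1) z) by (simpl; split; auto; rewrite F1; auto).
  assert (P2 : is_path T x (e2 :: l2) z) by (simpl; split; auto; rewrite F2; auto).
  pose proof (UR _ _ _ _ P1 P2 (Rd _ _ _ E1 F1 H1 L1 D1 R1) (Rd _ _ _ E2 F2 H2 L2 D2 R2)) as Heq.
  inversion Heq. subst. congruence.
Qed.


Lemma next_ex u v : exists y, u <> v -> dd u y = 1 /\ S (dd y v) = dd u v.
Proof.
  destruct (classic (u = v)) as [H|H]. - exists u; tauto.
  - destruct (closer_exists u v H) as [y Hy]. exists y; auto.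
Qed.

Definition nx u v := proj1_sig (constructive_indefinite_description _ (next_ex u v)).

Lemma nx_spec u v : u <> v -> dd u (nx u v) = 1 /\ S (dd (nx u v) v) = dd u v.
Proof. unfold nx. destruct (constructive_indefinite_description _ _); auto. Qed.

Lemma nx_unique u v y : dd u y = 1 -> S (dd y v) = dd u v -> y = nx u v.
Proof.
  intros H1 H2. assert (Hne : u <> v) by (intros ->; rewrite dd_refl in H2; discriminate).
  destruct (nx_spec u v Hne) as [A B]. eapply closer_unique; eauto.
Qed.

Definition geo x v i := Nat.iter i (fun u => nx u v) x.

Lemma geo_0 x v : geo x v 0 = x.
Proof. reflexivity. Qed.

Lemma geo_S x v i : geo x v (S i) = nx (geo x v i) v.
Proof. reflexivity. Qed.

Lemma geo_dv x v i : i <= dd x v -> dd (geo x v i) v = dd x v - i.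
Proof.
  induction i; intro H. - simpl. lia.
  - rewrite geo_S. assert (Hn : geo x v i <> v).
    { intro E. specialize (IHi ltac:(lia)). rewrite E, dd_refl in IHi. lia. }
    destruct (nx_spec _ _ Hn) as [_ B]. rewrite IHi in B by lia. lia.
Qed.

Lemma geo_adj x v i : i < dd x v -> dd (geo x v i) (geo x v (S i)) = 1.
Proof.
  intro H. rewrite geo_S. apply nx_spec. intro E. pose proof (geo_dv x v i ltac:(lia)).
  rewrite E, dd_refl in H0. lia.
Qed.

Lemma geo_end x v : geo x v (dd x v) = v.
Proof. apply dd_eq0. rewrite geo_dv; lia. Qed.

Lemma geo_dx x v i : i <= dd x v -> dd x (geo x v i) = i.
Proof.
  intro H. assert (A : dd x (geo x v i) <= i).
  { induction i. - simpl. rewrite dd_refl; lia.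
    - pose proof (dd_tri x (geo x v i) (geo x v (S i))).
      rewrite (geo_adj x v i) in H0 by lia. specialize (IHi ltac:(lia)). lia. }
  pose proof (dd_tri x (geo x v i) v). rewrite geo_dv in H0 by lia. lia.
Qed.

Definition walk (w : nat -> Vx) n :=
  (forall i, i < n -> dd (w i) (w (S i)) = 1) /\ (forall i, S (S i) <= n -> w i <> w (S (S i))).

Lemma NB w n : walk w n -> dd (w 0) (w n) = n.
Proof.
  intros [A Bk].
  assert (H : forall k, k <= n -> dd (w 0) (w k) = k /\ (k >= 1 -> dd (w 0) (w (k-1)) = k - 1)).
  { induction k; intro Hk.
    - rewrite dd_refl. split; auto; lia.
    - destruct IHk as [I1 I2]; [lia|]. split; [|intros _; replace (S k - 1) with k by lia; auto].
      destruct k.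
      + apply A; lia.
      + specialize (I2 ltac:(lia)). replace (S k - 1) with k in I2 by lia.
        assert (Ad : dd (w (S k)) (w (S (S k))) = 1) by (apply A; lia).
        assert (J1 : dd (w (S k)) (w 0) = S k) by (rewrite dd_sym; auto).
        assert (J2 : dd (w k) (w 0) = k) by (rewrite dd_sym; auto).
        destruct (M3 _ _ (w 0) Ad) as [Q|Q].
        * exfalso. apply (Bk k); [lia|].
          assert (Ak : dd (w (S k)) (w k) = 1) by (rewrite dd_sym; apply A; lia).
          apply (closer_unique (w (S k)) (w k) (w (S (S k))) (w 0)); auto; lia.
        * rewrite dd_sym. lia. }
  apply H; lia.
Qed.

Lemma walk_shift w i n : walk w (i + n) -> walk (fun k => w (i + k)) n.
Proof.
  intros [A Bk]. split; intros j Hj; simpl.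
  - replace (i + S j) with (S (i + j)) by lia. apply A; lia.
  - replace (i + S (S j)) with (S (S (i + j))) by lia. apply Bk; lia.
Qed.

Lemma NBinf w : (forall n, walk w n) -> forall i n, dd (w i) (w (i + n)) = n.
Proof.
  intros H i n. pose proof (NB _ n (walk_shift w i n (H (i + n)))). simpl in H0.
  rewrite Nat.add_0_r in H0. auto.
Qed.

Lemma is_ray_dd rho : is_ray T rho <-> forall i n, dd (rho i) (rho (i + n)) = n.
Proof.
  unfold is_ray. split; intros H i n; specialize (H i n).
  - apply dist_dd in H; auto.
  - apply dist_dd; auto.
Qed.

Lemma ray_walk rho n : is_ray T rho -> walk rho n.
Proof.
  intro H. rewrite is_ray_dd in H. split; intros i Hi.
  - specialize (H i 1). rewrite Nat.add_1_r in H. auto.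
  - specialize (H i 2). intro E. replace (i+2) with (S (S i)) in H by lia.
    rewrite <- E, dd_refl in H. discriminate.
Qed.

Lemma walk_ray w : (forall n, walk w n) -> is_ray T w.
Proof. intro H. apply is_ray_dd. apply NBinf; auto. Qed.

Lemma geo_walk x v : walk (geo x v) (dd x v).
Proof.
  split; intros i Hi. - apply geo_adj; lia.
  - intro E. pose proof (geo_dv x v i). pose proof (geo_dv x v (S (S i))).
    rewrite E in H. lia.
Qed.

Lemma GPU x y p i : dd x p = i -> dd p y = dd x y - i -> i <= dd x y -> p = geo x y i.
Proof.
  revert p; induction i; intros p H1 H2 H3.
  - simpl. symmetry. apply dd_eq0. auto.
  - assert (Hne : p <> x) by (intros ->; rewrite dd_refl in H1; discriminate).
    destruct (nx_spec p x Hne) as [A B].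
    assert (Hp' : nx p x = geo x y i).
    { apply IHi; [rewrite dd_sym; rewrite dd_sym in H1; lia| |lia].
      pose proof (dd_tri (nx p x) p y). pose proof (dd_tri x (nx p x) y).
      rewrite dd_sym in A. rewrite (dd_sym x (nx p x)) in H0. rewrite (dd_sym p x) in B. lia. }
    rewrite geo_S. apply nx_unique.
    + rewrite <- Hp', dd_sym. auto.
    + rewrite <- Hp'.
      assert (dd (nx p x) y = dd x y - i) by (rewrite Hp'; apply geo_dv; lia). lia.
Qed.

Lemma geo_last x v : x <> v -> geo x v (dd x v - 1) = nx v x.
Proof.
  intro Hne. assert (Hd : dd x v >= 1) by (destruct (dd x v) eqn:E; [apply dd_eq0 in E; contradiction| lia]).
  apply nx_unique.
  - rewrite dd_sym. pose proof (geo_adj x v (dd x v - 1) ltac:(lia)).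
    replace (S (dd x v - 1)) with (dd x v) in H by lia. rewrite geo_end in H. auto.
  - rewrite (dd_sym (geo x v (dd x v - 1)) x), geo_dx by lia. rewrite (dd_sym v x). lia.
Qed.

Lemma geo_1 x v : x <> v -> geo x v 1 = nx x v.
Proof. reflexivity. Qed.

Definition cat x v (f : nat -> Vx) i := if i <=? dd x v then geo x v i else f (i - dd x v).

Lemma cat_walk x v f m : walk f m -> f 0 = v -> (x = v \/ m = 0 \/ f 1 <> nx v x) ->
  walk (cat x v f) (dd x v + m).
Proof.
  intros [A Bk] Hf0 Hj. set (d := dd x v).
  assert (Hg : forall i, i <= d -> cat x v f i = geo x v i).
  { intros i Hi. unfold cat. fold d. destruct (Nat.leb_spec i d); [auto|lia]. }
  assert (Hf : forall i, d <= i -> cat x v f i = f (i - d)).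
  { intros i Hi. unfold cat. fold d. destruct (Nat.leb_spec i d).
    - assert (i = d) by lia. subst i. rewrite Nat.sub_diag, Hf0. apply geo_end.
    - auto. }
  split; intros i Hi.
  - destruct (Nat.lt_ge_cases i d).
    + rewrite !Hg by lia. apply geo_adj; auto.
    + rewrite !Hf by lia. replace (S i - d) with (S (i - d)) by lia. apply A; lia.
  - destruct (Nat.lt_ge_cases (S (S i)) (S d)).
    + rewrite !Hg by lia. apply (proj2 (geo_walk x v)). fold d. lia.
    + destruct (Nat.lt_ge_cases i d).
      * assert (i = d - 1) by lia. subst i. rewrite Hg by lia. rewrite Hf by lia.
        assert (Hxv : x <> v) by (intros E; subst d; rewrite E, dd_refl in H0; lia).
        rewrite geo_last by auto. replace (S (S (d - 1)) - d) with 1 by lia.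
        destruct Hj as [Hj|[Hj|Hj]]; [contradiction|lia|]. auto.
      * rewrite !Hf by lia. replace (S (S i) - d) with (S (S (i - d))) by lia. apply Bk. lia.
Qed.

Lemma cat_ray x v f : is_ray T f -> f 0 = v -> (x = v \/ f 1 <> nx v x) -> is_ray T (cat x v f).
Proof.
  intros R H0 Hj. apply walk_ray. intro n.
  assert (W : walk (cat x v f) (dd x v + n)).
  { apply cat_walk; auto. apply ray_walk; auto. tauto. }
  destruct W as [A Bk]. split; intros; [apply A|apply Bk]; lia.
Qed.

Lemma cat_0 x v f : cat x v f 0 = x.
Proof. unfold cat. simpl. reflexivity. Qed.

Lemma cat_tail x v f i : f 0 = v -> cat x v f (dd x v + i) = f i.
Proof.
  intro H0. unfold cat. destruct (Nat.leb_spec (dd x v + i) (dd x v)).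
  - assert (i = 0) by lia. subst. rewrite Nat.add_0_r, geo_end. auto.
  - f_equal; lia.
Qed.

Lemma cat_1 x v f : x <> v -> cat x v f 1 = nx x v.
Proof.
  intro H. unfold cat. destruct (Nat.leb_spec 1 (dd x v)). - reflexivity.
  - exfalso. apply H. apply dd_eq0. lia.
Qed.

Lemma cat_mid x v f i : i <= dd x v -> cat x v f i = geo x v i.
Proof. intro H. unfold cat. destruct (Nat.leb_spec i (dd x v)); [auto|lia]. Qed.

Lemma cat_cofinal x v f : f 0 = v -> cofinal T (cat x v f) f.
Proof. intro H. exists (dd x v), 0. intro i. rewrite Nat.add_0_r, Nat.add_comm. apply cat_tail; auto. Qed.

Lemma glue x v y : nx v x <> nx v y -> dd x y = dd x v + dd v y.
Proof.
  intro Hn. destruct (classic (x = v)) as [->|Hx]; [rewrite dd_refl; auto|].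
  destruct (classic (y = v)) as [->|Hy]; [rewrite dd_refl; lia|].
  assert (W : walk (cat x v (geo v y)) (dd x v + dd v y)).
  { apply cat_walk. - apply geo_walk. - reflexivity. - right. right. rewrite geo_1 by auto. auto. }
  apply NB in W. rewrite cat_0, cat_tail, geo_end in W by auto. auto.
Qed.

Lemma ray_cofinal_eq rho sig : is_ray T rho -> is_ray T sig -> rho 0 = sig 0 ->
  cofinal T rho sig -> forall n, rho n = sig n.
Proof.
  intros R1 R2 H0 [k [m Hkm]] n. rewrite is_ray_dd in R1, R2.
  assert (k = m).
  { pose proof (R1 0 k). pose proof (R2 0 m). pose proof (Hkm 0). simpl in *. rewrite H0, H2 in H. lia. }
  subst m.
  pose proof (R1 0 n) as A1. pose proof (R1 0 (n+k)) as A2. pose proof (R1 n k) as A3.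
  pose proof (R2 0 n) as B1. pose proof (R2 0 (n+k)) as B2. pose proof (R2 n k) as B3.
  pose proof (Hkm n) as Hn. simpl in *. rewrite <- Hn in B2, B3. rewrite <- H0 in B1, B2.
  assert (E1 : rho n = geo (rho 0) (rho (n+k)) n) by (apply GPU; lia).
  assert (E2 : sig n = geo (rho 0) (rho (n+k)) n) by (apply GPU; lia).
  congruence.
Qed.


Lemma geo_le x v i m : i + m <= dd x v -> dd (geo x v i) (geo x v (i + m)) <= m.
Proof.
  induction m; intro H. - rewrite Nat.add_0_r, dd_refl. lia.
  - pose proof (dd_tri (geo x v i) (geo x v (i + m)) (geo x v (i + S m))).
    replace (i + S m) with (S (i + m)) in * by lia. rewrite geo_adj in H0 by lia.
    specialize (IHm ltac:(lia)). lia.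
Qed.

Lemma geo_dd x v i j : i <= j -> j <= dd x v -> dd (geo x v i) (geo x v j) = j - i.
Proof.
  intros H1 H2. pose proof (geo_le x v i (j - i) ltac:(lia)). replace (i + (j - i)) with j in H by lia.
  pose proof (dd_tri x (geo x v i) (geo x v j)). rewrite !geo_dx in H0 by lia. lia.
Qed.

Definition iso (f : Vx -> Vx) := forall u v, dd (f u) (f v) = dd u v.

Lemma iso_inj f u v : iso f -> f u = f v -> u = v.
Proof. intros I E. apply dd_eq0. rewrite <- I, E. apply dd_refl. Qed.

Lemma iso_iter f k : iso f -> iso (Nat.iter k f).
Proof. intros I. induction k; intros u v; simpl; auto. rewrite I; auto. Qed.

Lemma axis_ray (f : Vx -> Vx) a : iso f -> dd a (f a) >= 1 ->
  geo a (f a) (dd a (f a) - 1) <> f (geo a (f a) 1) ->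
  exists F, is_ray T F /\ F 0 = a /\ F 1 = nx a (f a) /\ forall n, f (F n) = F (n + dd a (f a)).
Proof.
  intros I Ht J. set (t := dd a (f a)) in *. set (p := geo a (f a)).
  set (F := fun n => Nat.iter (n / t) f (p (n mod t))).
  assert (Ff : forall k i, i <= t -> F (k * t + i) = Nat.iter k f (p i)).
  { intros k i Hi. unfold F. destruct (Nat.eq_dec i t) as [->|Hne].
    - replace (k * t + t) with (S k * t + 0) by lia.
      rewrite <- (Nat.div_unique (S k * t + 0) t (S k) 0) by lia.
      rewrite <- (Nat.mod_unique (S k * t + 0) t (S k) 0) by lia.
      rewrite Nat.iter_succ_r. unfold p. rewrite geo_0. f_equal. unfold t. symmetry. apply geo_end.
    - rewrite <- (Nat.div_unique (k * t + i) t k i) by lia.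
      rewrite <- (Nat.mod_unique (k * t + i) t k i) by lia. reflexivity. }
  assert (Dn : forall n, n = (n / t) * t + n mod t /\ n mod t < t).
  { intro n. split. - rewrite Nat.mul_comm. apply Nat.div_mod. lia. - apply Nat.mod_upper_bound. lia. }
  exists F. split; [|split; [|split]].
  - apply walk_ray. intro m. split; intros n _.
    + destruct (Dn n) as [E1 E2]. set (k := n / t) in *. set (i := n mod t) in *.
      rewrite E1. replace (S (k * t + i)) with (k * t + S i) by lia.
      rewrite !Ff by lia. rewrite (iso_iter f k I). apply geo_adj. unfold t in *. lia.
    + destruct (Dn n) as [E1 E2]. set (k := n / t) in *. set (i := n mod t) in *.
      rewrite E1. destruct (le_lt_dec (S (S i)) t).
      * replace (S (S (k * t + i))) with (k * t + S (S i)) by lia. rewrite !Ff by lia.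
        intro E. apply (iso_inj _ _ _ (iso_iter f k I)) in E.
        pose proof (geo_dd a (f a) i (S (S i)) ltac:(lia) ltac:(unfold t in *; lia)).
        fold p in H. rewrite E, dd_refl in H. lia.
      * replace (S (S (k * t + i))) with (S k * t + 1) by lia. rewrite !Ff by lia.
        rewrite Nat.iter_succ_r. intro E. apply (iso_inj _ _ _ (iso_iter f k I)) in E.
        apply J. replace (t - 1) with i by lia. exact E.
  - replace 0 with (0 * t + 0) by lia. rewrite Ff by lia. reflexivity.
  - replace 1 with (0 * t + 1) by lia. rewrite Ff by lia. simpl. unfold p. apply geo_1.
    intro E. unfold t in Ht. rewrite <- E, dd_refl in Ht. lia.
  - intro n. destruct (Dn n) as [E1 E2]. set (k := n / t) in *. set (i := n mod t) in *.
    rewrite E1. replace (k * t + i + t) with (S k * t + i) by lia. rewrite !Ff by lia. reflexivity.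
Qed.


Variable Gm : group.
Variable A : action T Gm.

Lemma mulgV x : mul Gm x (inv Gm x) = one Gm.
Proof.
  set (y := mul Gm x (inv Gm x)).
  assert (Hyy : mul Gm y y = y).
  { unfold y. rewrite <- mulA. rewrite (mulA Gm (inv Gm x) x (inv Gm x)). rewrite mulVg, mul1g. reflexivity. }
  transitivity (mul Gm (mul Gm (inv Gm y) y) y). { rewrite mulVg, mul1g. reflexivity. }
  rewrite <- mulA, Hyy, mulVg. reflexivity.
Qed.

Notation act := (actV A).

Lemma actV_invl g v : act (inv Gm g) (act g v) = v.
Proof. rewrite <- actV_mul, mulVg, actV_one. reflexivity. Qed.
Lemma actV_invr g v : act g (act (inv Gm g) v) = v.
Proof. rewrite <- actV_mul, mulgV, actV_one. reflexivity. Qed.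
Lemma actE_invr g e : actE A g (actE A (inv Gm g) e) = e.
Proof. rewrite <- actE_mul, mulgV, actE_one. reflexivity. Qed.

Lemma act_path g u l v : is_path T u l v -> is_path T (act g u) (map (actE A g) l) (act g v).
Proof.
  revert u; induction l as [|e l IH]; intros u H; simpl in *.
  - subst; auto.
  - destruct H as [H1 H2]. split. + rewrite act_src, H1; auto. + rewrite act_rng. auto.
Qed.

Lemma dd_act_le g u v : dd (act g u) (act g v) <= dd u v.
Proof.
  destruct (geod u v) as [l [Hl [L _]]]. pose proof (dd_le _ _ _ (act_path g _ _ _ Hl)).
  rewrite length_map in H. lia.
Qed.

Lemma iso_act g : iso (act g).
Proof.
  intros u v. apply Nat.le_antisymm. apply dd_act_le.
  pose proof (dd_act_le (inv Gm g) (act g u) (act g v)). rewrite !actV_invl in H. auto.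
Qed.

Lemma act_inj g u v : act g u = act g v -> u = v.
Proof. apply iso_inj, iso_act. Qed.

Lemma hyp_inv h : hyperbolic A h -> hyperbolic A (inv Gm h).
Proof.
  intros [H1 H2]. split.
  - intros v E. apply (H1 v). rewrite <- E at 1. apply actV_invr.
  - intros e E. apply (H2 (bar T e)). rewrite bar_inv. rewrite <- E at 1. apply actE_invr.
Qed.

Lemma min_disp h : exists a, forall v, dd a (act h a) <= dd v (act h v).
Proof.
  destruct HT as [[v0 _] _].
  destruct (min_exists (fun n => exists v, dd v (act h v) = n)) as [n [[a Ha] Hm]].
  { exists (dd v0 (act h v0)), v0; auto. }
  exists a. intro v. rewrite Ha. apply Hm. eauto.
Qed.

Lemma disp_pos h a : hyperbolic A h -> dd a (act h a) >= 1.
Proof.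
  intros [H1 _]. destruct (dd a (act h a)) eqn:E; [|lia]. apply dd_eq0 in E. exfalso. apply (H1 a). auto.
Qed.

Lemma J_lemma h a : hyperbolic A h -> (forall v, dd a (act h a) <= dd v (act h v)) ->
  geo a (act h a) (dd a (act h a) - 1) <> act h (geo a (act h a) 1).
Proof.
  intros Hh Hm E. pose proof (disp_pos h a Hh) as Ht.
  destruct (Nat.eq_dec (dd a (act h a)) 1) as [H1|H1].
  - pose proof (geo_end a (act h a)) as GE. rewrite H1 in GE.
    replace (dd a (act h a) - 1) with 0 in E by lia. rewrite GE in E. change (geo a (act h a) 0) with a in E.
    destruct (proj1 (dd_adj _ _) H1) as [f [Hs Hr]].
    apply (proj2 Hh f). apply edge_unique.
    + rewrite act_src, src_bar, Hs, Hr. reflexivity.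
    + rewrite act_rng, bar_rng, Hr, Hs. auto.
  - specialize (Hm (geo a (act h a) 1)). rewrite <- E in Hm.
    rewrite geo_dd in Hm; lia.
Qed.

Lemma AXIS h : hyperbolic A h -> exists F G, is_ray T F /\ is_ray T G /\ F 0 = G 0 /\ F 1 <> G 1 /\
  cofinal T (fun i => act h (F i)) F /\ cofinal T (fun i => act h (G i)) G.
Proof.
  intro Hh. destruct (min_disp h) as [a Ha].
  pose proof (hyp_inv h Hh) as Hh'.
  assert (Dinv : forall v, dd v (act (inv Gm h) v) = dd v (act h v)).
  { intro v. rewrite <- (iso_act h v), actV_invr. apply dd_sym. }
  assert (Ha' : forall v, dd a (act (inv Gm h) a) <= dd v (act (inv Gm h) v)).
  { intro v. rewrite !Dinv. auto. }
  destruct (axis_ray (act h) a (iso_act h) (disp_pos h a Hh) (J_lemma h a Hh Ha)) as [F [RF [F0 [F1 Fe]]]].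
  destruct (axis_ray (act (inv Gm h)) a (iso_act _) (disp_pos _ a Hh') (J_lemma _ a Hh' Ha')) as [G [RG [G0 [G1 Ge]]]].
  exists F, G. split; [auto|split; [auto|split; [congruence|split]]].
  - rewrite F1, G1. intro E. apply (J_lemma h a Hh Ha).
    assert (Hne : a <> act h a) by (intro E'; pose proof (disp_pos h a Hh); rewrite <- E', dd_refl in H; lia).
    rewrite geo_last, geo_1 by auto. symmetry. apply nx_unique.
    + rewrite iso_act. apply nx_spec. auto.
    + assert (Hne' : a <> act (inv Gm h) a).
      { intro E'. pose proof (disp_pos _ a Hh'). rewrite <- E', dd_refl in H. lia. }
      rewrite E.
      assert (X: dd (act h (nx a (act (inv Gm h) a))) a = dd (nx a (act (inv Gm h) a)) (act (inv Gm h) a)).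
      { rewrite <- (iso_act h _ (act (inv Gm h) a)), actV_invr. reflexivity. }
      rewrite X. destruct (nx_spec _ _ Hne') as [_ B]. rewrite B, Dinv, dd_sym. reflexivity.
  - split.
    + exists 0, (dd a (act h a)). intro i. rewrite Nat.add_0_r. apply Fe.
    + exists (dd a (act h a)), 0. intro i. rewrite Nat.add_0_r. rewrite <- Dinv, <- Ge, actV_invr. reflexivity.
Qed.


Lemma cofinal_refl rho : cofinal T rho rho.
Proof. exists 0, 0. auto. Qed.
Lemma cofinal_sym rho sig : cofinal T rho sig -> cofinal T sig rho.
Proof. intros [k [m H]]. exists m, k. intro i. auto. Qed.
Lemma cofinal_trans rho sig tau : cofinal T rho sig -> cofinal T sig tau -> cofinal T rho tau.
Proof.
  intros [k [m H]] [k' [m' H']]. exists (k + k'), (m + m'). intro i.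
  replace (i + (k + k')) with ((i + k') + k) by lia. rewrite H.
  replace (i + k' + m) with ((i + m) + k') by lia. rewrite H'. f_equal; lia.
Qed.
Lemma cofinal_ext rho rho' sig : (forall n, rho n = rho' n) -> cofinal T rho' sig -> cofinal T rho sig.
Proof. intros E [k [m H]]. exists k, m. intro i. rewrite E. auto. Qed.
Lemma cofinal_map (f : Vx -> Vx) rho sig : cofinal T rho sig -> cofinal T (fun i => f (rho i)) (fun i => f (sig i)).
Proof. intros [k [m H]]. exists k, m. intro i. rewrite H. auto. Qed.

Lemma ray_adj rho n : is_ray T rho -> dd (rho n) (rho (S n)) = 1.
Proof. intro R. apply (ray_walk rho (S n) R). lia. Qed.
Lemma ray_nb rho n : is_ray T rho -> rho n <> rho (S (S n)).
Proof. intro R. apply (ray_walk rho (S (S n)) R). lia. Qed.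
Lemma ray_d0 rho n : is_ray T rho -> dd (rho 0) (rho n) = n.
Proof. intro R. rewrite is_ray_dd in R. apply (R 0 n). Qed.

Lemma ray_shift rho j : is_ray T rho -> is_ray T (fun i => rho (j + i)).
Proof. intro R. rewrite is_ray_dd in *. intros i n. rewrite Nat.add_assoc. apply R. Qed.

Definition D2 := forall x y1 y2 y3, dd x y1 = 1 -> dd x y2 = 1 -> dd x y3 = 1 ->
  y1 = y2 \/ y1 = y3 \/ y2 = y3.

Lemma RU (HD : D2) rho sig : is_ray T rho -> is_ray T sig -> rho 0 = sig 0 -> rho 1 = sig 1 ->
  forall n, rho n = sig n.
Proof.
  intros R1 R2 E0 E1.
  assert (H : forall n, rho n = sig n /\ rho (S n) = sig (S n)).
  { induction n; auto. destruct IHn as [I1 I2]. split; auto.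
    destruct (HD (rho (S n)) (rho (S (S n))) (sig (S (S n))) (rho n)) as [Q|[Q|Q]]; auto.
    - apply ray_adj; auto.
    - rewrite I2. apply ray_adj; auto.
    - rewrite dd_sym. apply ray_adj; auto.
    - exfalso. apply (ray_nb rho n R1). auto.
    - exfalso. apply (ray_nb sig n R2). rewrite <- I1. auto. }
  intro n. apply H.
Qed.

Lemma EXT (HD : D2) rho n v : is_ray T rho -> n >= 1 -> dd (rho n) v = 1 -> dd (rho 0) v = S n ->
  v = rho (S n).
Proof.
  intros R Hn H1 H2.
  destruct (HD (rho n) v (rho (n - 1)) (rho (S n))) as [Q|[Q|Q]]; auto.
  - pose proof (ray_adj rho (n-1) R) as X. replace (S (n-1)) with n in X by lia. rewrite dd_sym; exact X.
  - apply ray_adj; auto.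
  - subst v. rewrite ray_d0 in H2 by auto. lia.
  - exfalso. apply (ray_nb rho (n - 1) R). replace (S (S (n - 1))) with (S n) by lia. auto.
Qed.

Lemma COVER (HD : D2) F G : is_ray T F -> is_ray T G -> F 0 = G 0 -> F 1 <> G 1 ->
  forall n v, dd (F 0) v = n -> v = F n \/ v = G n.
Proof.
  intros RF RG E0 E1. induction n; intros v Hv.
  - left. symmetry. apply dd_eq0. auto.
  - assert (Hne : v <> F 0) by (intros ->; rewrite dd_refl in Hv; discriminate).
    destruct (nx_spec v (F 0) Hne) as [A1 A2].
    destruct (IHn (nx v (F 0))) as [Q|Q].
    + rewrite dd_sym. rewrite (dd_sym v) in A2. lia.
    + destruct n.
      * assert (W : v = F 1 \/ v = G 1 \/ F 1 = G 1).
        { apply (HD (F 0)); [exact Hv | apply (ray_adj F 0 RF) | rewrite E0; apply (ray_adj G 0 RG)]. }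
        destruct W as [W|[W|W]]; [left; auto | right; auto | contradiction].
      * left. apply EXT; auto. lia. rewrite <- Q, dd_sym. auto.
    + destruct n.
      * assert (W : v = F 1 \/ v = G 1 \/ F 1 = G 1).
        { apply (HD (F 0)); [exact Hv | apply (ray_adj F 0 RF) | rewrite E0; apply (ray_adj G 0 RG)]. }
        destruct W as [W|[W|W]]; [left; auto | right; auto | contradiction].
      * right. apply EXT; auto. lia. rewrite <- Q, dd_sym. auto. rewrite <- E0. auto.
Qed.

Lemma TWOCLASS (HD : D2) F G rho j : is_ray T F -> is_ray T G -> F 0 = G 0 -> F 1 <> G 1 ->
  is_ray T rho -> rho 0 = F j -> cofinal T rho F \/ cofinal T rho G.
Proof.
  intros RF RG E0 E1 R Hj.
  set (Aa := fun i => F (j + i)).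
  assert (RA : is_ray T Aa) by (apply ray_shift; auto).
  set (Rr := cat (F j) (F 0) G).
  assert (HnR : F j = F 0 \/ G 1 <> nx (F 0) (F j)).
  { destruct j; [left; auto|right]. rewrite <- (nx_unique (F 0) (F (S j)) (F 1)). auto.
    - apply (ray_adj F 0 RF).
    - pose proof ((proj1 (is_ray_dd F) RF) 1 j) as X1. pose proof (ray_d0 F (S j) RF) as X2. simpl in X1. lia. }
  assert (RR : is_ray T Rr) by (apply cat_ray; auto).
  assert (R1 : Rr 1 <> Aa 1).
  { unfold Rr, Aa. destruct j.
    - unfold cat. rewrite dd_refl. simpl. auto.
    - rewrite cat_1. + rewrite <- (nx_unique (F (S j)) (F 0) (F j)).
        * rewrite Nat.add_1_r. apply (ray_nb F j RF).
        * rewrite dd_sym. apply (ray_adj F j RF).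
        * rewrite dd_sym, (dd_sym (F (S j))). rewrite !ray_d0 by auto. lia.
      + intro E. pose proof (ray_d0 F (S j) RF). rewrite E, dd_refl in H. lia. }
  destruct (HD (F j) (rho 1) (Aa 1) (Rr 1)) as [Q|[Q|Q]].
  - rewrite <- Hj. apply (ray_adj rho 0 R).
  - unfold Aa. rewrite Nat.add_1_r. apply (ray_adj F j RF).
  - pose proof (ray_adj Rr 0 RR). assert (X: Rr 0 = F j) by (unfold Rr; apply cat_0). rewrite X in H. auto.
  - left. apply (cofinal_ext _ Aa). apply RU; auto. unfold Aa. rewrite Nat.add_0_r. auto.
    exists 0, j. intro i. unfold Aa. f_equal. lia.
  - right. apply (cofinal_ext _ Rr). { apply RU; auto; unfold Rr; rewrite ?cat_0; auto. }
    apply cat_cofinal. auto.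
  - exfalso. auto.
Qed.

Lemma NO_D2 h1 h2 : hyperbolic A h1 -> hyperbolic A h2 ->
  (forall x : point T, ~ (fixes A h1 x /\ fixes A h2 x)) -> ~ D2.
Proof.
  intros H1 H2 Hno HD.
  destruct (AXIS h1 H1) as [F [G [RF [RG [E0 [E1 [CF CG]]]]]]].
  destruct (AXIS h2 H2) as [F' [_ [RF' [_ [_ [_ [CF' _]]]]]]].
  assert (C : cofinal T F' F \/ cofinal T F' G).
  { destruct (COVER HD F G RF RG E0 E1 (dd (F 0) (F' 0)) (F' 0) eq_refl) as [Q|Q].
    - eapply TWOCLASS; eauto.
    - destruct (TWOCLASS HD G F F' (dd (F 0) (F' 0)) RG RF (eq_sym E0) (not_eq_sym E1) RF' Q); auto. }
  apply (Hno (PB T F' RF')). simpl. split; auto.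
  destruct C as [C|C].
  - apply (cofinal_trans _ (fun i => act h1 (F i))). apply cofinal_map; auto.
    apply (cofinal_trans _ F); auto. apply cofinal_sym; auto.
  - apply (cofinal_trans _ (fun i => act h1 (G i))). apply cofinal_map; auto.
    apply (cofinal_trans _ G); auto. apply cofinal_sym; auto.
Qed.


Definition Bv x := exists y1 y2 y3, dd x y1 = 1 /\ dd x y2 = 1 /\ dd x y3 = 1 /\
  y1 <> y2 /\ y1 <> y3 /\ y2 <> y3.

Lemma B_exists : strongly_hyperbolic A -> exists x, Bv x.
Proof.
  intros [h1 [h2 [H1 [H2 Hno]]]]. apply NNPP. intro Hn. apply (NO_D2 h1 h2 H1 H2 Hno).
  intros x y1 y2 y3 A1 A2 A3. apply NNPP. intro Q. apply Hn. exists x, y1, y2, y3.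
  repeat split; auto; intro; apply Q; auto.
Qed.

Definition ong x y z := dd x z + dd z y = dd x y.

Lemma geo_path x y : exists l, is_path T x l y /\
  Forall (fun e => ong x y (src T e) /\ ong x y (rng T e)) l.
Proof.
  remember (dd x y) as n. revert x Heqn. induction n; intros x Hn.
  - exists []. split; [apply dd_eq0; auto|constructor].
  - assert (Hne : x <> y) by (intros ->; rewrite dd_refl in Hn; discriminate).
    destruct (nx_spec x y Hne) as [A1 A2].
    destruct (IHn (nx x y) ltac:(lia)) as [l [Hl Fl]].
    destruct (proj1 (dd_adj _ _) A1) as [e [Es Er]].
    exists (e :: l). split.
    + simpl. split; auto. rewrite Er; auto.
    + constructor.
      * unfold ong. rewrite Es, Er, dd_refl, A1. lia.
      * eapply Forall_impl; [|exact Fl]. intros e' [O1 O2]. unfold ong in *.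
        split.
        -- pose proof (dd_tri x (nx x y) (src T e')). pose proof (dd_tri x (src T e') y). lia.
        -- pose proof (dd_tri x (nx x y) (rng T e')). pose proof (dd_tri x (rng T e') y). lia.
Qed.

Definition Wh x := exists b1 b2, Bv b1 /\ Bv b2 /\ ong b1 b2 x.

Lemma ong_sym x y z : ong x y z -> ong y x z.
Proof. unfold ong. intro H. rewrite (dd_sym y z), (dd_sym z x), (dd_sym y x). lia. Qed.

Lemma ong_sub b1 b2 u z : ong b1 b2 u -> ong u b1 z -> ong b1 b2 z.
Proof.
  unfold ong. intros H1 H2. pose proof (dd_tri b1 z b2). pose proof (dd_tri z u b2).
  rewrite (dd_sym u z), (dd_sym z b1), (dd_sym u b1) in *. lia.
Qed.

Lemma ALLW : minimal A -> strongly_hyperbolic A -> forall v, Wh v.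
Proof.
  intros Hmin Hsh. apply Hmin.
  - destruct (B_exists Hsh) as [x Hx]. exists x, x, x. repeat split; auto. unfold ong. rewrite dd_refl. lia.
  - intros u v [b1 [b2 [B1 [B2 O1]]]] [b3 [b4 [B3 [B4 O2]]]].
    destruct (geo_path u b1) as [l1 [P1 F1]].
    destruct (geo_path b1 b3) as [l2 [P2 F2]].
    destruct (geo_path b3 v) as [l3 [P3 F3]].
    exists (l1 ++ l2 ++ l3). split.
    + apply is_path_app. exists b1. split; auto. apply is_path_app. eauto.
    + apply Forall_app. split; [|apply Forall_app; split].
      * eapply Forall_impl; [|exact F1]. intros e [Q1 Q2].
        split; exists b1, b2; repeat split; auto; eapply ong_sub; eauto.
      * eapply Forall_impl; [|exact F2]. intros e [Q1 Q2]. split; exists b1, b3; auto.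
      * eapply Forall_impl; [|exact F3]. intros e [Q1 Q2].
        split; exists b3, b4; repeat split; auto; eapply ong_sub; eauto; apply ong_sym; auto.
  - intros g v [b1 [b2 [B1 [B2 O1]]]]. exists (act g b1), (act g b2).
    assert (BB : forall x, Bv x -> Bv (act g x)).
    { intros x [y1 [y2 [y3 [A1 [A2 [A3 [N1 [N2 N3]]]]]]]]. exists (act g y1), (act g y2), (act g y3).
      rewrite !iso_act. repeat split; auto; intro E; apply act_inj in E; auto. }
    repeat split; auto. unfold ong in *. rewrite !iso_act. auto.
Qed.

Lemma two_nbrs x : (forall v, Wh v) -> exists y1 y2, dd x y1 = 1 /\ dd x y2 = 1 /\ y1 <> y2.
Proof.
  intro AW. destruct (AW x) as [b1 [b2 [B1 [B2 O]]]].
  destruct (classic (x = b1)) as [->|H1].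
  { destruct B1 as [y1 [y2 [_ [? [? [_ [? _]]]]]]]. exists y1, y2; auto. }
  destruct (classic (x = b2)) as [->|H2].
  { destruct B2 as [y1 [y2 [_ [? [? [_ [? _]]]]]]]. exists y1, y2; auto. }
  destruct (nx_spec x b1 H1) as [A1 D1]. destruct (nx_spec x b2 H2) as [A2 D2].
  exists (nx x b1), (nx x b2). repeat split; auto. intro E. unfold ong in O.
  pose proof (dd_tri b1 (nx x b1) b2). rewrite E in H at 2. rewrite (dd_sym b1 (nx x b1)) in H.
  rewrite (dd_sym b1 x) in O. lia.
Qed.

Lemma other_nbr x u : (forall v, Wh v) -> exists y, dd x y = 1 /\ y <> u.
Proof.
  intro AW. destruct (two_nbrs x AW) as [y1 [y2 [A1 [A2 N]]]].
  destruct (classic (y1 = u)) as [->|H]; [exists y2|exists y1]; auto.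
Qed.

Lemma BR sv rv : (forall v, Wh v) -> dd sv rv = 1 -> exists c, Bv c /\ dd c rv < dd c sv.
Proof.
  intros AW Hsr. destruct (AW rv) as [b1 [b2 [B1 [B2 O]]]]. unfold ong in O.
  destruct (M3 sv rv b1 Hsr) as [Q1|Q1]; [exists b1; rewrite !(dd_sym b1); split; auto; lia|].
  destruct (M3 sv rv b2 Hsr) as [Q2|Q2]; [exists b2; rewrite !(dd_sym b2); split; auto; lia|].
  exfalso. pose proof (dd_tri b1 sv b2). rewrite (dd_sym rv b1) in Q1. rewrite (dd_sym b1 sv) in H. lia.
Qed.

Lemma DIR x y : (forall v, Wh v) -> dd x y = 1 -> exists rho, is_ray T rho /\ rho 0 = x /\ rho 1 = y.
Proof.
  intros AW Hxy.
  assert (step : forall u v, exists w, dd u v = 1 -> dd v w = 1 /\ w <> u).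
  { intros u v. destruct (other_nbr v u AW) as [w Hw]. exists w; auto. }
  set (nxt := fun u v => proj1_sig (constructive_indefinite_description _ (step u v))).
  assert (nxt_spec : forall u v, dd u v = 1 -> dd v (nxt u v) = 1 /\ nxt u v <> u).
  { intros u v H. unfold nxt. destruct (constructive_indefinite_description _ _); auto. }
  set (sq := fix sq n := match n with 0 => (x, y) | S n => (snd (sq n), nxt (fst (sq n)) (snd (sq n))) end).
  assert (Inv : forall n, dd (fst (sq n)) (snd (sq n)) = 1).
  { induction n; simpl; auto. apply nxt_spec; auto. }
  exists (fun n => fst (sq n)). split; [|split; reflexivity].
  apply walk_ray. intro m. split; intros i _; simpl.
  - apply Inv.
  - apply not_eq_sym. apply nxt_spec. apply Inv.
Qed.


Definition Z0 e v := dd v (r e) < dd v (s e).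

Lemma sr_adj e : dd (s e) (r e) = 1.
Proof. apply dd_adj. eauto. Qed.

Lemma Z0_eq e v : Z0 e v -> dd v (s e) = S (dd v (r e)).
Proof.
  unfold Z0. intro H. rewrite (dd_sym v (s e)), (dd_sym v (r e)) in *. destruct (M3 (s e) (r e) v (sr_adj e)) as [Q|Q]; lia.
Qed.

Lemma notZ0_eq e v : ~ Z0 e v -> dd v (r e) = S (dd v (s e)).
Proof.
  unfold Z0. intro H. rewrite (dd_sym v (s e)), (dd_sym v (r e)) in *. destruct (M3 (s e) (r e) v (sr_adj e)) as [Q|Q]; lia.
Qed.

Lemma Z0_neq_s e v : Z0 e v -> v <> s e.
Proof. intros H ->. unfold Z0 in H. rewrite dd_refl in H. lia. Qed.

Lemma ZB_via e v sig rho : Z0 e v -> is_ray T sig -> sig 0 = v -> sig 1 <> nx v (s e) ->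
  is_ray T rho -> cofinal T rho sig -> inZB T e rho.
Proof.
  intros Hz Rs S0 S1 Rr C. exists (cat (s e) v sig). split; [|split].
  - apply cat_ray; auto.
  - apply (cofinal_trans _ sig); auto. apply cofinal_sym. apply cat_cofinal; auto.
  - exists 0. split. + apply cat_0.
    + rewrite cat_1 by (apply not_eq_sym, Z0_neq_s; auto). symmetry. apply nx_unique.
      * apply sr_adj.
      * pose proof (Z0_eq e v Hz). rewrite (dd_sym (r e) v), (dd_sym (s e) v). lia.
Qed.

Lemma FIXRAY g c rho : act g c = c -> is_ray T rho -> rho 0 = c ->
  cofinal T (fun i => act g (rho i)) rho -> forall n, act g (rho n) = rho n.
Proof.
  intros Hc R R0 C. apply ray_cofinal_eq; auto.
  - rewrite is_ray_dd in *. intros i n. rewrite iso_act. auto.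
  - congruence.
Qed.

Lemma TRI_aux g c rho : act g c <> c -> is_ray T rho -> rho 0 = c ->
  cofinal T (fun i => act g (rho i)) rho -> rho 1 <> nx c (act g c) ->
  act g (rho 1) = nx (act g c) c.
Proof.
  intros Hc R R0 C Hn.
  assert (RX : is_ray T (cat (act g c) c rho)) by (apply cat_ray; auto).
  assert (Rg : is_ray T (fun i => act g (rho i))) by (rewrite is_ray_dd in *; intros i n; rewrite iso_act; auto).
  pose proof (ray_cofinal_eq _ _ Rg RX) as Q.
  rewrite <- (cat_1 (act g c) c rho) by auto. apply Q.
  - rewrite cat_0, R0. auto.
  - apply (cofinal_trans _ rho); auto. apply cofinal_sym, cat_cofinal; auto.
Qed.

Lemma TRI g c r1 r2 r3 : is_ray T r1 -> is_ray T r2 -> is_ray T r3 ->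
  r1 0 = c -> r2 0 = c -> r3 0 = c -> r1 1 <> r2 1 -> r1 1 <> r3 1 -> r2 1 <> r3 1 ->
  cofinal T (fun i => act g (r1 i)) r1 -> cofinal T (fun i => act g (r2 i)) r2 ->
  cofinal T (fun i => act g (r3 i)) r3 -> act g c = c.
Proof.
  intros R1 R2 R3 E1 E2 E3 N12 N13 N23 C1 C2 C3. apply NNPP. intro Hc.
  set (a := nx c (act g c)).
  assert (K : forall rho rho', is_ray T rho -> is_ray T rho' -> rho 0 = c -> rho' 0 = c ->
    cofinal T (fun i => act g (rho i)) rho -> cofinal T (fun i => act g (rho' i)) rho' ->
    rho 1 <> a -> rho' 1 <> a -> rho 1 = rho' 1).
  { intros rho rho' Ra Rb Ea Eb Ca Cb Na Nb. apply (act_inj g).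
    rewrite (TRI_aux g c rho), (TRI_aux g c rho'); auto. }
  destruct (classic (r1 1 = a)) as [Q1|Q1].
  - apply N23. apply K; auto; intro; congruence.
  - destruct (classic (r2 1 = a)) as [Q2|Q2].
    + apply N13. apply K; auto; intro; congruence.
    + apply N12. apply K; auto.
Qed.


Lemma pick_two b0 u : Bv b0 -> exists n1 n2, dd b0 n1 = 1 /\ dd b0 n2 = 1 /\ n1 <> n2 /\ n1 <> u /\ n2 <> u.
Proof.
  intros [y1 [y2 [y3 [A1 [A2 [A3 [N1 [N2 N3]]]]]]]].
  destruct (classic (y1 = u)) as [->|H1]. { exists y2, y3. repeat split; auto. }
  destruct (classic (y2 = u)) as [->|H2]. { exists y1, y3. repeat split; auto. }
  exists y1, y2. repeat split; auto.
Qed.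

Definition HZB e g := forall rho, is_ray T rho -> inZB T e rho -> cofinal T (fun i => act g (rho i)) rho.

Lemma ANCHOR e g : (forall v, Wh v) -> HZB e g -> exists c, Z0 e c /\ act g c = c.
Proof.
  intros AW HZ.
  destruct (BR (s e) (r e) AW (sr_adj e)) as [b0 [Bb Zb]].
  assert (Zb' : Z0 e b0) by exact Zb.
  assert (Hbs : b0 <> s e) by (apply Z0_neq_s; auto).
  destruct (pick_two b0 (nx b0 (s e)) Bb) as [na [nb [Aa [Ab [Nab [Na Nb]]]]]].
  destruct (BR b0 na AW Aa) as [c [Bc Hc]].
  assert (Hcb : c <> b0) by (intros ->; rewrite dd_refl in Hc; lia).
  assert (Ebc : nx b0 c = na).
  { symmetry. apply nx_unique; auto. rewrite (dd_sym c na), (dd_sym c b0) in Hc. destruct (M3 b0 na c Aa) as [Q|Q]; lia. }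
  assert (Gl : dd c (s e) = dd c b0 + dd b0 (s e)) by (apply glue; congruence).
  assert (Zc : Z0 e c).
  { unfold Z0. pose proof (dd_tri c b0 (r e)). unfold Z0 in Zb'. lia. }
  assert (Ecs : nx c b0 = nx c (s e)).
  { destruct (nx_spec c b0 Hcb) as [M1 M2]. apply nx_unique; auto.
    pose proof (dd_tri (nx c b0) b0 (s e)).
    destruct (M3 c (nx c b0) (s e) M1); lia. }
  assert (RD : forall m, dd c m = 1 -> exists rho, is_ray T rho /\ rho 0 = c /\ rho 1 = m /\ inZB T e rho).
  { intros m Hm. destruct (classic (m = nx c b0)) as [->|Hne].
    - destruct (DIR b0 nb AW Ab) as [sig [Rs [S0 S1]]].
      assert (Rx : is_ray T (cat c b0 sig)) by (apply cat_ray; auto; right; rewrite S1, Ebc; auto).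
      exists (cat c b0 sig). split; [auto|split; [apply cat_0|split; [apply cat_1; auto|]]].
      apply (ZB_via e b0 sig); auto. congruence. apply cat_cofinal; auto.
    - destruct (DIR c m AW Hm) as [sig [Rs [S0 S1]]]. exists sig. split; [auto|split; [auto|split; [auto|]]].
      apply (ZB_via e c sig); auto. congruence. apply cofinal_refl. }
  exists c. split; auto.
  destruct Bc as [m1 [m2 [m3 [A1 [A2 [A3 [N1 [N2 N3]]]]]]]].
  destruct (RD m1 A1) as [r1 [R1 [E1 [F1 Z1]]]].
  destruct (RD m2 A2) as [r2 [R2 [E2 [F2 Z2]]]].
  destruct (RD m3 A3) as [r3 [R3 [E3 [F3 Z3]]]].
  apply (TRI g c r1 r2 r3); auto; congruence.
Qed.

Lemma CROSS e x y : dd x y = 1 -> Z0 e x -> ~ Z0 e y -> x = r e /\ y = s e.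
Proof.
  intros Hxy Zx Zy. pose proof (Z0_eq e x Zx) as X. pose proof (notZ0_eq e y Zy) as Y.
  destruct (M3 x y (s e) Hxy) as [P|P]; destruct (M3 x y (r e) Hxy) as [Q|Q]; try lia.
  destruct (classic (dd x (r e) = 0)) as [D|D].
  - split; apply dd_eq0; [auto|]. lia.
  - exfalso. assert (Hx : x <> r e) by (intros ->; rewrite dd_refl in D; auto).
    assert (Ey : nx x (s e) = y) by (symmetry; apply nx_unique; auto; lia).
    assert (Nr : nx x (r e) <> y).
    { intro E. destruct (nx_spec x (r e) Hx) as [_ B']. rewrite E in B'. lia. }
    pose proof (glue (r e) x (s e) ltac:(congruence)). rewrite dd_sym, sr_adj in H.
    rewrite (dd_sym (r e) x) in H. lia.
Qed.

Lemma CASEA e g c v : (forall v, Wh v) -> HZB e g -> act g c = c -> Z0 e v -> v <> c ->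
  nx v c = nx v (s e) -> act g v = v.
Proof.
  intros AW HZ Hc Zv Hvc E.
  destruct (other_nbr v (nx v c) AW) as [y [Ay Ny]].
  destruct (DIR v y AW Ay) as [sig [Rs [S0 S1]]].
  assert (RX : is_ray T (cat c v sig)) by (apply cat_ray; auto; right; congruence).
  assert (ZX : inZB T e (cat c v sig)).
  { apply (ZB_via e v sig); auto. congruence. apply cat_cofinal; auto. }
  pose proof (FIXRAY g c _ Hc RX (cat_0 c v sig) (HZ _ RX ZX) (dd c v + 0)).
  rewrite cat_tail in H by auto. rewrite S0 in H. auto.
Qed.

Lemma MAIN e g : (forall v, Wh v) -> HZB e g -> forall v, Z0 e v -> act g v = v.
Proof.
  intros AW HZ. destruct (ANCHOR e g AW HZ) as [c [Zc Hc]].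
  assert (H : forall n v, dd c v = n -> Z0 e v -> act g v = v).
  { induction n as [n IH] using lt_wf_ind. intros v Hn Zv.
    destruct (classic (v = c)) as [->|Hvc]; auto.
    destruct (nx_spec v c Hvc) as [Aw Dw]. set (w := nx v c) in *.
    assert (Zw : Z0 e w).
    { apply NNPP. intro Zw. destruct (CROSS e v w Aw Zv Zw) as [-> ->].
      pose proof (Z0_eq e c Zc). rewrite (dd_sym c), (dd_sym c (r e)) in H. lia. }
    assert (Gw : act g w = w) by (apply (IH (dd c w)); auto; pose proof (dd_sym c w); pose proof (dd_sym c v); lia).
    destruct (classic (nx v (s e) = w)) as [Q|Q].
    { apply (CASEA e g c v); auto. }
    apply NNPP. intro Hgv. set (z := act g v) in *.
    assert (Az : dd w z = 1) by (unfold z; rewrite <- Gw, iso_act, dd_sym; auto).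
    enough (Gz : act g z = z) by (apply Hgv; apply (act_inj g); fold z; auto).
    destruct (M3 w z c Az) as [P|P].
    + assert (Zz : Z0 e z).
      { apply NNPP. intro Zz. destruct (CROSS e w z Az Zw Zz) as [Ew Ez].
        pose proof (Z0_eq e c Zc). rewrite Ew, Ez, (dd_sym (s e) c), (dd_sym (r e) c) in P. lia. }
      apply (IH (dd c z)); auto. pose proof (dd_sym c z); pose proof (dd_sym c w); pose proof (dd_sym c v); lia.
    + assert (Dws : dd w (s e) = S (dd v (s e))).
      { destruct (M3 v w (s e) Aw) as [P'|P']; auto. exfalso. apply Q. symmetry. apply nx_unique; auto. }
      assert (Zz : Z0 e z).
      { apply NNPP. intro Zz. destruct (CROSS e w z Az Zw Zz) as [Ew Ez].
        apply Q. symmetry. rewrite Ew. apply nx_unique.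
        - rewrite <- Ew. exact Aw.
        - rewrite dd_sym, sr_adj. pose proof (Z0_eq e v Zv). rewrite Ew in Aw. lia. }
      assert (Hzc : z <> c) by (intros E; rewrite E, dd_refl in P; lia).
      apply (CASEA e g c z); auto.
      assert (E1 : nx z c = w) by (symmetry; apply nx_unique; [rewrite dd_sym; auto| pose proof (dd_sym z c); pose proof (dd_sym w c); lia]).
      assert (Hzv : z <> v) by (intro E; apply Hgv; auto).
      assert (Hws : w <> s e) by (intros E; rewrite E, dd_refl in Dws; lia).
      assert (E2 : nx w (s e) = v) by (symmetry; apply nx_unique; [rewrite dd_sym; auto|lia]).
      rewrite E1. apply nx_unique. { rewrite dd_sym; auto. }
      destruct (M3 w z (s e) Az) as [P'|P']; [|lia].
      exfalso. apply Hzv. rewrite <- E2. apply nx_unique; auto. }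
  intros v Zv. apply (H (dd c v)); auto.
Qed.

End Tree.

Lemma inZ0_Z0 (T : graph) (HT : is_tree T) e v : inZ0 T e v <-> Z0 T HT e v.
Proof.
  unfold inZ0, Z0. split.
  - intros [a [b0 [Ha [Hb H]]]]. apply (dist_dd T HT) in Ha. apply (dist_dd T HT) in Hb. subst. auto.
  - intro H. exists (dd T HT v (src T e)), (dd T HT v (rng T e)). repeat split; auto; apply (dist_dd T HT); auto.
Qed.

Theorem mainTheorem9 (T : graph) (HT : is_tree T) (Gm : group) (A : action T Gm)
  (Hmin : minimal A) (Hsh : strongly_hyperbolic A) (e : E T) :
  (forall g : G Gm, fixes_ZB A e g -> fixes_Z A e g) /\
  (forall g : G Gm, fixes_Z0 A e g <-> fixes_ZB A e g) /\
  (forall g : G Gm, fixes_ZB A e g <-> fixes_Z_cl A e g).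
Proof.
  pose proof (ALLW T HT Gm A Hmin Hsh) as AW.
  assert (C1 : forall g : G Gm, fixes_ZB A e g -> fixes_Z A e g).
  { intros g Hg x Hx. destruct x as [v|rho h]; simpl in *.
    - apply (MAIN T HT Gm A e g AW).
      + intros rho R Z. apply (Hg rho R Z).
      + apply inZ0_Z0; auto.
    - apply (Hg rho h Hx). }
  split; [exact C1|split].
  - intro g. split.
    + intros Hg rho h [rho' [R' [C [j [Ej Ej1]]]]]. simpl.
      assert (Fix : forall n, actV A g (rho' (n + S j)) = rho' (n + S j)).
      { intro n. apply (Hg (rho' (n + S j))). apply inZ0_Z0 with (HT := HT). unfold Z0.
        rewrite (is_ray_dd T HT) in R'.
        pose proof (R' j (n + 1)) as D1. pose proof (R' (S j) n) as D2.
        rewrite Ej in D1. rewrite Ej1 in D2.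
        replace (j + (n + 1)) with (n + S j) in D1 by lia. replace (S j + n) with (n + S j) in D2 by lia.
        rewrite (dd_sym T HT (rho' (n + S j))), (dd_sym T HT (rho' (n + S j))). lia. }
      apply (cofinal_trans T _ (fun i => actV A g (rho' i))).
      * apply cofinal_map; auto.
      * apply (cofinal_trans T _ rho'). { exists (S j), (S j). intro i. apply Fix. }
        apply cofinal_sym; auto.
    + intros Hg v Hv. apply (C1 g Hg (PV T v)). auto.
  - intro g. split.
    + intros Hg x Hx _. apply C1; auto.
    + intros Hg rho h Hr. apply (Hg (PB T rho h)); auto.
      intros l Hl. exists rho, h. exact Hl.
Qed.
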